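(* Let $\theta_{\min}\ge 1/2$, and let $\mathcal S$ be a compatible community of a population with minimum participation threshold $\theta_{\min}$, with $|\mathcal S|\ge k$. Then there exist at least $k(2\theta_{\min}-1)$ users $i\in\mathcal S$ which are compatible with all other users in $\mathcal S$, i.e., whose speech point $p_i$ lies in $[l_j,r_j]$ for every $j\in\mathcal S$.
   Context: Users $1,\dots,n$ each have a closed interval $[l_i,r_i]$, a speech point $p_i\in[l_i,r_i]$ and a participation threshold $\theta_i\in[0,1]$, with $\theta_{\min}=\min_i\theta_i$. A set $\mathcal S$ of users is a compatible community if for every $i\in\mathcal S$, $|\{j\in\mathcal S\setminus\{i\}:p_j\in[l_i,r_i]\}|\ge\theta_i|\mathcal S\setminus\{i\}|$. *)

(* Defs.v *)
From mathcomp Require Import all_boot all_order all_algebra.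
Set Implicit Arguments. Unset Strict Implicit. Unset Printing Implicit Defensive.
Import Order.TTheory GRing.Theory Num.Theory.
Local Open Scope ring_scope.

(* A population: users of a finite type U, user i has interval [l i, r i],
   speech point p i and participation threshold theta i. *)
Definition in_itv (R : realFieldType) (a b x : R) : bool := (a <= x) && (x <= b).

Definition compatible_community (R : realFieldType) (U : finType)
  (l r p theta : U -> R) (S : {set U}) : Prop :=
  forall i, i \in S ->
    theta i * (#|S :\ i|)%:R <=
      (#|[set j in S :\ i | in_itv (l i) (r i) (p j)]|)%:R.

Definition universally_compatible (R : realFieldType) (U : finType)
  (l r p : U -> R) (S : {set U}) : {set U} :=
  [set i in S | [forall j in S, in_itv (l j) (r j) (p i)]].

(* Main.v *)
Require Import Defs.
From mathcomp Require Import all_boot all_order all_algebra.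
From mathcomp Require Import ring lra.
Import Order.TTheory GRing.Theory Num.Theory.
Local Open Scope ring_scope.

Lemma ex_max (R : realFieldType) (U : finType) (f : U -> R) (S : {set U}) i0 :
  i0 \in S -> exists2 a, a \in S & forall j, j \in S -> f j <= f a.
Proof.
move=> h; case: (arg_maxP f h) => a aS H; exists a => // j jS; exact: H.
Qed.

Lemma ex_min (R : realFieldType) (U : finType) (f : U -> R) (S : {set U}) i0 :
  i0 \in S -> exists2 a, a \in S & forall j, j \in S -> f a <= f j.
Proof.
move=> h; case: (arg_minP f h) => a aS H; exists a => // j jS; exact: H.
Qed.

Lemma bad_bound (R : realFieldType) (U : finType) (l r p theta : U -> R)
  (S : {set U}) a (A : {set U})
  (hS : compatible_community l r p theta S) (aS : a \in S)
  (hA : A \subset S :\ a)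
  (hA2 : forall j, j \in A -> ~~ Defs.in_itv (l a) (r a) (p j)) :
  (#|A|)%:R <= (1 - theta a) * (#|S :\ a|)%:R.
Proof.
have H := hS a aS.
set G := [set j in S :\ a | Defs.in_itv (l a) (r a) (p j)] in H.
have dis : [disjoint A & G].
  rewrite -setI_eq0; apply/eqP/setP => j; rewrite !inE.
  case jA: (j \in A) => //=; have := hA2 j jA; case: Defs.in_itv => //; by rewrite andbF.
have sub : A :|: G \subset S :\ a.
  rewrite subUset hA /=; apply/subsetP => j; rewrite inE; by case/andP.
have e : #|A :|: G| = (#|A| + #|G|)%N by rewrite -cardsUI (disjoint_setI0 dis) cards0 addn0.
have h := subset_leq_card sub; rewrite e in h.
have h' : ((#|A| + #|G|)%:R <= (#|S :\ a|)%:R :> R) by rewrite ler_nat.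
rewrite natrD in h'. lra.
Qed.

Theorem lemma16 (R : realFieldType) (U : finType) (l r p theta : U -> R)
  (theta_min : R) (k : nat) (S : {set U})
  (hp : forall i, l i <= p i /\ p i <= r i)
  (htheta : forall i, 0 <= theta i /\ theta i <= 1)
  (hmin_le : forall i, theta_min <= theta i)
  (hmin_att : exists i, theta i = theta_min)
  (hhalf : 1 / 2 <= theta_min)
  (hS : compatible_community l r p theta S)
  (hk : (k <= #|S|)%N) :
  k%:R * (2 * theta_min - 1) <= (#|universally_compatible l r p S|)%:R.
Proof.
have [S0 | [i0 i0S]] := set_0Vmem S.
  move: hk; rewrite S0 cards0 leqn0 => /eqP ->; rewrite mul0r; exact: ler0n.
have [a aS Ha] := @ex_max _ _ l S i0 i0S.
have [b bS Hb] := @ex_min _ _ r S i0 i0S.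
pose A := [set j in S | p j < l a].
pose B := [set j in S | r b < p j].
have hA : (#|A|)%:R <= (1 - theta a) * (#|S :\ a|)%:R.
  apply: (@bad_bound _ _ l r p theta S a A hS aS).
    apply/subsetP => j; rewrite !inE => /andP [jS lt]; rewrite jS andbT.
    apply/eqP => ja; move: lt; rewrite ja ltNge; by case: (hp a) => ->.
  move=> j; rewrite inE /Defs.in_itv => /andP [_ lt]; by rewrite leNgt lt.
have hB : (#|B|)%:R <= (1 - theta b) * (#|S :\ b|)%:R.
  apply: (@bad_bound _ _ l r p theta S b B hS bS).
    apply/subsetP => j; rewrite !inE => /andP [jS lt]; rewrite jS andbT.
    apply/eqP => jb; move: lt; rewrite jb ltNge; by case: (hp b) => _ ->.
  move=> j; rewrite inE /Defs.in_itv => /andP [_ lt]; by rewrite (leNgt (p j)) lt andbF.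
have sub : S \subset universally_compatible l r p S :|: (A :|: B).
  apply/subsetP => j jS; rewrite !inE jS /=.
  case h1: (p j < l a); first by rewrite !orbT.
  case h2: (r b < p j); first by rewrite !orbT.
  move/negbT: h1; rewrite -leNgt => h1; move/negbT: h2; rewrite -leNgt => h2.
  apply/orP; left; apply/forallP => i; apply/implyP => iS; rewrite /Defs.in_itv.
  by rewrite (le_trans (Ha i iS) h1) (le_trans h2 (Hb i iS)).
have c1 := subset_leq_card sub.
have c2 := leq_card_setU (universally_compatible l r p S) (A :|: B).
have c3 := leq_card_setU A B.
have hn : (#|S| <= #|universally_compatible l r p S| + #|A| + #|B|)%N.
  rewrite -addnA; apply: (leq_trans c1); apply: (leq_trans (leq_card_setU _ _)); rewrite leq_add2l; exact: leq_card_setU.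
have hnR : (#|S|)%:R <= (#|universally_compatible l r p S|)%:R + (#|A|)%:R + (#|B|)%:R :> R.
  by rewrite -!natrD ler_nat.
have ea : #|S| = (#|S :\ a|).+1 by rewrite (cardsD1 a S) aS.
have eb : #|S :\ b| = #|S :\ a| by apply/eqP; rewrite -eqSS -ea (cardsD1 b S) bS.
rewrite eb in hB.
move: hnR hk; rewrite ea => hnR hk.
have hkR : (k%:R <= (#|S :\ a|)%:R + 1 :> R) by rewrite natr1 ler_nat.
set m := (#|S :\ a|)%:R in hA hB hnR hkR.
set u := (#|universally_compatible l r p S|)%:R in hnR *.
set x := (#|A|)%:R in hA hnR. set y := (#|B|)%:R in hB hnR.
rewrite -natr1 in hnR; rewrite -/m in hnR.
have m0 : 0 <= m by exact: ler0n.
have t1 := hmin_le a. have t2 := hmin_le b.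
have [_ t3] := htheta a.
have f1 : theta_min * m <= theta a * m by rewrite ler_wpM2r.
have f2 : theta_min * m <= theta b * m by rewrite ler_wpM2r.
have f3 : k%:R * (2 * theta_min - 1) <= (m + 1) * (2 * theta_min - 1).
  by rewrite ler_wpM2r //; lra.
nra.
Qed.
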